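(* Let $m\ge 1$, let $t_1<\cdots<t_m$ be real, and let $\omega_0,\dots,\omega_m$ be real numbers with $\sum_{k=0}^{\ell}\omega_k\ge 0$ for $\ell=0,1,\dots,m$ and such that the weight $$w(x)={\rm e}^{-x^2}\Big(\omega_0+\sum_{k=1}^m\omega_k\,\theta(x-t_k)\Big),\qquad x\in\mathbb{R},$$ is not identically zero. Let $P_n$, $h_n$, $\alpha_n$, $\beta_n$, $R_{n,k}$, $r_{n,k}$ be as in the context. Then for every $n\ge 0$, $$\alpha_n=\frac12\sum_{k=1}^m R_{n,k},\qquad \beta_n=\frac12\Big(\sum_{k=1}^m r_{n,k}+n\Big).$$
   Context: $\theta(y)=1$ for $y>0$ and $\theta(y)=0$ otherwise. $P_n(z)$ ($n\ge0$) denotes the monic polynomial of degree $n$ orthogonal with respect to $w$ on $\mathbb{R}$: $\int_{\mathbb{R}}P_j(x)P_k(x)w(x)\,dx=h_k\delta_{jk}$ with $h_k>0$; $P_{-1}:=0$. They satisfy the three-term recurrence $zP_n(z)=P_{n+1}(z)+\alpha_nP_n(z)+\beta_nP_{n-1}(z)$ for $n\ge0$, with $\beta_0:=0$ and $\beta_n=h_n/h_{n-1}$ for $n\ge1$. For $k=1,\dots,m$: $R_{n,k}:=\omega_k{\rm e}^{-t_k^2}P_n(t_k)^2/h_n$ for $n\ge0$, and $r_{n,k}:=\omega_k{\rm e}^{-t_k^2}P_n(t_k)P_{n-1}(t_k)/h_{n-1}$ for $n\ge1$, with $r_{0,k}:=0$. *)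

(* Defs.v *)
From HB Require Import structures.
From mathcomp Require Import all_boot all_order all_algebra.
From mathcomp Require Import all_classical all_reals all_analysis.
Set Implicit Arguments. Unset Strict Implicit. Unset Printing Implicit Defensive.
Import Order.TTheory GRing.Theory Num.Theory.
Local Open Scope ring_scope.

Definition theta {R : realType} (y : R) : R := if 0 < y then 1 else 0.

(* w(x) = e^{-x^2} (omega_0 + sum_{k=1}^m omega_k theta(x - t_k));
   t and omega are indexed by nat, only t 1..t m and omega 0..omega m matter. *)
Definition weight {R : realType} (m : nat) (t om : nat -> R) (x : R) : R :=
  expR (- x ^+ 2) * (om 0%N + \sum_(1 <= k < m.+1) om k * theta (x - t k)).

Definition beta_of {R : realType} (h : nat -> R) (n : nat) : R :=
  if n is n'.+1 then h n / h n' else 0.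

Definition Rnk {R : realType} (t om : nat -> R) (P : nat -> {poly R})
  (h : nat -> R) (n k : nat) : R :=
  om k * expR (- t k ^+ 2) * (P n).[t k] ^+ 2 / h n.

Definition rnk {R : realType} (t om : nat -> R) (P : nat -> {poly R})
  (h : nat -> R) (n k : nat) : R :=
  if n is n'.+1 then om k * expR (- t k ^+ 2) * (P n).[t k] * (P n').[t k] / h n'
  else 0.

(* Main.v *)
Require Import Defs.
From HB Require Import structures.
From mathcomp Require Import all_boot all_order all_algebra.
From mathcomp Require Import all_classical all_reals all_analysis.
From mathcomp Require Import ring lra measurable_realfun.
Import Order.TTheory GRing.Theory Num.Theory.
Import numFieldNormedType.Exports.
Local Open Scope ring_scope.

Section A.
Context {R : realType}.
Local Open Scope classical_set_scope.
Local Open Scope ring_scope.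
Definition G (x : R) := expR (- x ^+ 2).

Lemma absx_le (x : R) : `|x| <= 1 + x ^+ 2.
Proof.
have h : x ^+ 2 = `|x| ^+ 2 by rewrite real_normK ?num_real.
rewrite h; have := normr_ge0 x; set y := `|x|; nra.
Qed.

Lemma poly_bound (p : {poly R}) :
  exists (C : R) (N : nat), 0 <= C /\ forall x, `|p.[x]| <= C * (1 + x ^+ 2) ^+ N.
Proof.
elim/poly_ind: p => [|p c [C [N [C0 ih]]]].
  by exists 0, 0%N; split => // x; rewrite horner0 normr0 mul0r.
exists (C + `|c|), N.+1; split; first by rewrite addr_ge0.
move=> x; rewrite !hornerE /=.
have hx := absx_le x.
have h1 : 1 <= 1 + x ^+ 2 by rewrite lerDl sqr_ge0.
have hN : 1 <= (1 + x ^+ 2) ^+ N by rewrite exprn_ege1.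
rewrite (le_trans (ler_normD _ _)) // normrM exprS mulrDl.
apply: lerD.
  rewrite [_ * ((1 + _) * _)]mulrCA mulrC ler_pM //.
rewrite -[X in X <= _]mulr1 ler_pM // mulr_ege1 //.
Qed.

Lemma pow_exp (M : nat) (y : R) : 0 <= y ->
  (1 + y) ^+ M.+1 <= (M.+1%:R) ^+ M.+1 * expR y.
Proof.
move=> y0; set K : R := M.+1%:R.
have K1 : 1 <= K by rewrite /K ler1n.
have K0 : 0 < K by rewrite /K ltr0n.
have h1 : 1 + y <= K * expR (y / K).
  have := expR_ge1Dx (y / K).
  have e : K * (1 + y / K) = K + y by rewrite mulrDr mulr1 mulrCA divff ?mulr1 // gt_eqF.
  move=> h; have h2 : K * (1 + y / K) <= K * expR (y / K) by rewrite ler_pM2l.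
  apply: le_trans h2.
  by rewrite e lerD2r.
have -> : expR y = expR (y / K) ^+ M.+1.
  by rewrite -expRM_natl /K mulrCA divff ?mulr1 // gt_eqF.
rewrite -exprMn; apply: lerXn2r; rewrite ?nnegrE //; first lra.
by rewrite mulr_ge0 // ?expR_ge0 // ltW.
Qed.

Lemma gbound (p : {poly R}) :
  exists K : R, 0 <= K /\ forall x, `|p.[x]| * G x <= K / (1 + x ^+ 2).
Proof.
have [C [N [C0 hp]]] := poly_bound p.
exists (C * (N.+1%:R) ^+ N.+1); split; first by rewrite mulr_ge0 // exprn_ge0.
move=> x.
have s0 : 0 < 1 + x ^+ 2 by rewrite ltr_pwDl // sqr_ge0.
rewrite ler_pdivlMr //.
apply: (le_trans (y := C * (1 + x ^+ 2) ^+ N * G x * (1 + x ^+ 2))).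
  by rewrite ler_pM2r // ler_pM2r ?expR_gt0.
have e : C * (1 + x ^+ 2) ^+ N * G x * (1 + x ^+ 2) = C * ((1 + x ^+ 2) ^+ N.+1 * G x).
  by rewrite [in RHS]exprS; move: ((1 + x ^+ 2) ^+ N) (G x) => b g; ring.
rewrite e ler_wpM2l //.
have := @pow_exp N (x ^+ 2) (sqr_ge0 x).
have eG : expR (x ^+ 2) * G x = 1 by rewrite /G -expRD subrr expR0.
move=> h; have := ler_wpM2r (expR_ge0 (- x ^+ 2)) h.
by rewrite -mulrA -/(G x) eG mulr1.
Qed.
Lemma is_derive_G (x : R) : is_derive x 1 G (G x * (- (2 * x))).
Proof.
have h1 : is_derive x 1 (fun y : R => - y ^+ 2) (- (2 * x)).
  apply: is_derive_eq; rewrite /= (_ : x%:A = x); [by rewrite -mulr2n mulr_natl | exact: mulr1].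
have := @is_derive1_comp R expR (fun y : R => - y ^+ 2) x _ _ (is_derive_expR (- x ^+ 2)) h1.
by [].
Qed.
Definition Dop (q : {poly R}) : {poly R} := ('X * q) *+ 2 - q^`().
Definition F (q : {poly R}) (x : R) := - (q.[x] * G x).

Lemma is_derive_F (q : {poly R}) (x : R) : is_derive x 1 (F q) ((Dop q).[x] * G x).
Proof.
have h2 : is_derive x 1 (horner q * G) (q.[x] *: (G x * (- (2 * x))) + G x *: q^`().[x]).
  apply: is_deriveM; exact: is_derive_G.
have h3 := is_deriveN h2.
have -> : F q = - (horner q * G) by apply/funext => y; rewrite /F.
apply: is_derive_eq.
rewrite /Dop !hornerE /=.
rewrite /GRing.scale /=. ring.
Qed.

Notation mu := (@lebesgue_measure R).
Definition hh (x : R) := (1 + x ^+ 2)^-1.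

Lemma hh_gt0 x : 0 < hh x.
Proof. by rewrite /hh invr_gt0 ltr_pwDl // sqr_ge0. Qed.

Lemma cont_hh : continuous hh.
Proof.
move=> x; apply: (continuousV (s := fun y : R => 1 + y ^+ 2)); first by rewrite gt_eqF // ltr_pwDl // sqr_ge0.
have -> : (fun x : R => 1 + x ^+ 2) = horner (1 + 'X ^+ 2 : {poly R}).
  by apply/funext => y; rewrite !hornerE.
exact: continuous_horner.
Qed.

Lemma int_hh : mu.-integrable setT (fun x => (hh x)%:E).
Proof.
apply/integrableP; split.
  by apply/measurable_EFinP; exact: continuous_measurable_fun cont_hh.
under eq_integral => x _ do rewrite gee0_abs ?lee_fin ?(ltW (hh_gt0 x)) //.
rewrite ge0_symfun_integralT //; last 3 first.
- by move=> x; exact: ltW (hh_gt0 x).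
- exact: cont_hh.
- by move=> x; rewrite /hh /= sqrrN.
rewrite -set_itvcy.
rewrite (@ge0_continuous_FTC2y R hh atan 0 (pi / 2)) //.
- by rewrite atan0 -EFinB -EFinM ltry.
- by move=> x _; exact: ltW (hh_gt0 x).
- exact: continuous_subspaceT cont_hh.
- exact: cvgy_atan.
- by apply: cvg_at_right_filter; exact: continuous_atan.
- by move=> x _; rewrite derive1_atan.
Qed.

Lemma cont_G : continuous G.
Proof. exact: continuous_gauss_fun. Qed.

Lemma cont_pG (p : {poly R}) : continuous (fun x => p.[x] * G x).
Proof. by move=> x; apply: continuousM; [exact: continuous_horner|exact: cont_G]. Qed.

Lemma absE_le (a b : R) : `|a| <= `|b| -> (`|a%:E| <= `|b%:E|)%E.
Proof. by move=> h; rewrite /= lee_fin. Qed.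

Lemma int_pG (p : {poly R}) : mu.-integrable setT (fun x => (p.[x] * G x)%:E).
Proof.
have [K [K0 hK]] := gbound p.
apply: (@le_integrable _ _ _ mu setT measurableT _ (fun x => (K * hh x)%:E)).
- by apply/measurable_EFinP; exact: continuous_measurable_fun (cont_pG p).
- move=> x _; apply: absE_le; rewrite normrM (ger0_norm (expR_ge0 _)).
  rewrite [`|K * _|]ger0_norm ?mulr_ge0 ?(ltW (hh_gt0 x)) //.
- have := integrableZl measurableT K int_hh.
  by apply: eq_integrable => // x _; rewrite EFinM.
Qed.

Lemma cont_F (q : {poly R}) : continuous (F q).
Proof. by move=> x; apply: (continuousN (f := fun x => q.[x] * G x)); exact: cont_pG. Qed.

Lemma ftc_ab (q : {poly R}) a b : a < b ->
  (\int[mu]_(x in `[a, b]) ((Dop q).[x] * G x)%:E = (F q b - F q a)%:E)%E.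
Proof.
move=> ab; rewrite EFinB.
apply: continuous_FTC2 => //.
- exact: continuous_subspaceT (cont_pG (Dop q)).
- split.
  + by move=> x _; apply: ex_derive; exact: is_derive_F.
  + by apply: cvg_at_right_filter; exact: cont_F.
  + by apply: cvg_at_left_filter; exact: cont_F.
- by move=> x _; have h := is_derive_F q x; rewrite derive1E derive_val.
Qed.

Lemma F_lim_seq (q : {poly R}) (u : nat -> R) :
  (forall n, n%:R <= (u n) ^+ 2) -> (fun n => F q (u n)) @ \oo --> (0 : R).
Proof.
move=> hu; have [K [K0 hK]] := gbound q.
have lim1 : (fun n => harmonic n * K) @ \oo --> (0 : R).
  rewrite -(mul0r K); apply: cvgMr_tmp; exact: cvg_harmonic.
have lim2 : (fun n => - (harmonic n * K)) @ \oo --> (0 : R).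
  rewrite -oppr0; apply: cvgN; exact: lim1.
apply: (squeeze_cvgr _ lim2 lim1); apply: nearW => n.
have hb : `|F q (u n)| <= harmonic n * K.
  rewrite /F normrN normrM (ger0_norm (expR_ge0 _)).
  apply: (le_trans (hK (u n))).
  rewrite /harmonic /= mulrC; apply: ler_wpM2r => //.
  rewrite lef_pV2 ?posrE ?ltr_pwDl ?sqr_ge0 //.
  by rewrite -natr1 addrC lerD2l.
by rewrite -ler_norml.
Qed.

Lemma dc_gen (f : R -> R) (D : set R) (mD : measurable D) (I : nat -> set R)
  (mI : forall n, measurable (I n)) (sub : forall n, I n `<=` D)
  (ev : forall x, D x -> \forall n \near \oo, I n x)
  (cf : continuous f) (intf : mu.-integrable setT (EFin \o f)) (c : R) :
  (\int[mu]_(x in I n) (f x)%:E)%E @[n --> \oo] --> c%:E ->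
  (\int[mu]_(x in D) (f x)%:E = c%:E)%E.
Proof.
move=> lim.
pose f_ n := (EFin \o f) \_ (I n).
have mf : measurable_fun setT f by exact: continuous_measurable_fun.
have h := @dominated_cvg _ _ _ mu D mD f_ (EFin \o f) (abse \o (EFin \o f)).
have e : (fun n => \int[mu]_(x in D) f_ n x)%E = (fun n => \int[mu]_(x in I n) (f x)%:E)%E.
  by apply/funext => n; rewrite /f_ -integral_mkcondr setIidr.
have mf_ : forall n, measurable_fun D (f_ n).
  move=> n; apply: (measurable_restrict (EFin \o f) (mI n) mD).1.
  apply/measurable_EFinP; apply: measurable_funS mf => //.
have f_f : forall x, D x -> f_ ^~ x @ \oo --> (EFin \o f) x.
  move=> x Dx; apply: cvg_near_cst; move: (ev x Dx); apply: filterS => n Inx.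
  by rewrite /f_ patchE mem_set.
have fing : forall x, D x -> (abse \o (EFin \o f)) x \is a fin_num by [].
have ig : mu.-integrable D (abse \o (EFin \o f)).
  by apply: integrable_abse; apply: integrableS intf.
have absfg : forall n x, D x -> (`|f_ n x| <= (abse \o (EFin \o f)) x)%E.
  move=> n x Dx; rewrite /f_ patchE; case: ifP => _ //.
  by rewrite abse0 abse_ge0.
have := h mf_ f_f fing ig absfg; rewrite e => lim2.
exact: (cvg_unique _ lim2 lim).
Qed.

Lemma int_ray (q : {poly R}) (a : R) :
  (\int[mu]_(x in `]a, +oo[) ((Dop q).[x] * G x)%:E = (- F q a)%:E)%E.
Proof.
pose b n : R := `|a| + n.+1%:R.
have ab n : a < b n.
  by rewrite /b (le_lt_trans (ler_norm a)) // ltrDl ltr0n.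
apply: (@dc_gen (fun x => (Dop q).[x] * G x) _ _ (fun n => `]a, b n]%classic)).
- by [].
- by move=> n.
- by move=> n x /=; rewrite !in_itv /= => /andP[-> _].
- move=> x /=; rewrite in_itv /= andbT => ax.
  exists (Num.truncn `|x|) => // n /= hn; rewrite in_itv /= ax /=.
  rewrite /b (le_trans (ler_norm x)) // (le_trans (ltW (Num.Theory.truncnS_gt _))) //.
  by rewrite ler_wpDl // ler_nat ltnS.
- exact: cont_pG.
- exact: int_pG.
have e n : (\int[mu]_(x in `]a, b n]) ((Dop q).[x] * G x)%:E = (F q (b n) - F q a)%:E)%E.
  rewrite integral_itv_obnd_cbnd; first exact: ftc_ab.
  apply/measurable_EFinP; apply: (measurable_funS measurableT) => //.
  exact: continuous_measurable_fun (cont_pG _).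
under eq_fun do rewrite e.
apply: cvg_EFin; first exact: nearW.
rewrite -[X in _ --> X]add0r; apply: cvgB; last exact: cvg_cst.
apply: F_lim_seq => n; rewrite /b.
have h1 : n%:R <= `|a| + n.+1%:R :> R by rewrite ler_wpDl // ler_nat.
have h2 : 1 <= `|a| + n.+1%:R :> R by rewrite ler_wpDl // ler1n.
move: h1 h2; set c := `|a| + _; move=> h1 h2; nra.
Qed.

Lemma int_all (q : {poly R}) :
  (\int[mu]_x ((Dop q).[x] * G x)%:E = 0%:E)%E.
Proof.
pose b n : R := n.+1%:R.
have ab n : - b n < b n.
  have h : (0 : R) < b n by rewrite /b ltr0n.
  lra.
apply: (@dc_gen (fun x => (Dop q).[x] * G x) _ _ (fun n => `[- b n, b n]%classic)).
- by [].
- by move=> n.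
- by [].
- move=> x _.
  exists (Num.truncn `|x|) => // n /= hn; rewrite in_itv /= -ler_norml.
  rewrite /b (le_trans (ltW (Num.Theory.truncnS_gt _))) //.
  by rewrite ler_nat ltnS.
- exact: cont_pG.
- exact: int_pG.
have e n : (\int[mu]_(x in `[(- b n)%R, b n]) ((Dop q).[x] * G x)%:E = (F q (b n) - F q (- b n))%:E)%E.
  exact: ftc_ab.
under eq_fun do rewrite e.
apply: cvg_EFin; first exact: nearW.
rewrite -[X in _ --> X](subr0 0); apply: cvgB.
- apply: F_lim_seq => n; rewrite /b.
  have h1 : n%:R <= n.+1%:R :> R by rewrite ler_nat.
  have h2 : 1 <= n.+1%:R :> R by rewrite ler1n.
  move: h1 h2; set c := n.+1%:R; move=> h1 h2; nra.
- apply: (F_lim_seq q (fun n => - b n)) => n; rewrite /b sqrrN.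
  have h1 : n%:R <= n.+1%:R :> R by rewrite ler_nat.
  have h2 : 1 <= n.+1%:R :> R by rewrite ler1n.
  move: h1 h2; set c := n.+1%:R; move=> h1 h2; nra.
Qed.

Definition pG (p : {poly R}) (x : R) : \bar R := (p.[x] * G x)%:E.

Lemma w_decomp m (t om : nat -> R) (p : {poly R}) (x : R) :
  (p.[x] * weight m t om x)%:E =
  ((om 0%N)%:E * pG p x + \sum_(1 <= k < m.+1) (om k)%:E * (pG p \_ `]t k, +oo[) x)%E.
Proof.
rewrite /weight /pG -EFinM.
have -> : (\sum_(1 <= k < m.+1) (om k)%:E * (pG p \_ `]t k, +oo[) x)%E
   = (\sum_(1 <= k < m.+1) (om k * (p.[x] * G x * theta (x - t k))))%:E.
  rewrite -sumEFin; apply: eq_bigr => k _; rewrite patchE /theta subr_gt0.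
  have -> : (x \in `]t k, +oo[%classic) = (t k < x).
    by apply/idP/idP; rewrite in_setE /= in_itv /= andbT.
  by case: ifP => _; rewrite ?mulr1 ?mulr0 ?mule0 // -EFinM.
rewrite -EFinD; congr EFin.
rewrite /G !mulrDr !big_distrr /=; congr (_ + _); first by ring.
by apply: eq_bigr => k _; ring.
Qed.

Lemma int_ray_pG (p : {poly R}) (a : R) :
  mu.-integrable setT (pG p \_ `]a, +oo[).
Proof.
apply: (proj1 (@integrable_mkcond _ _ _ mu `]a, +oo[%classic (pG p) (measurable_itv _))).
apply: (integrableS measurableT) => //; exact: int_pG.
Qed.

Lemma intW m (t om : nat -> R) (p : {poly R}) :
  mu.-integrable setT (fun x => (p.[x] * weight m t om x)%:E).
Proof.
have h : mu.-integrable setT (fun x => ((om 0%N)%:E * pG p x +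
    \sum_(1 <= k < m.+1) (om k)%:E * (pG p \_ `]t k, +oo[) x)%E).
  apply: integrableD => //.
    by apply: integrableZl => //; exact: int_pG.
  apply: (integrable_sum measurableT) => k _.
  by apply: integrableZl => //; exact: int_ray_pG.
by apply: eq_integrable h => // x _; rewrite w_decomp.
Qed.

Lemma J_decomp m (t om : nat -> R) (p : {poly R}) :
  (\int[mu]_x (p.[x] * weight m t om x)%:E =
  (om 0%N)%:E * \int[mu]_x pG p x +
    \sum_(1 <= k < m.+1) (om k)%:E * \int[mu]_(x in `]t k, +oo[) pG p x)%E.
Proof.
under eq_integral do rewrite w_decomp.
rewrite integralD //; last 2 first.
- by apply: integrableZl => //; exact: int_pG.
- apply: (integrable_sum measurableT) => k _.
  by apply: integrableZl => //; exact: int_ray_pG.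
rewrite integralZl //; last exact: int_pG.
rewrite integral_sum //; last first.
  by move=> k; apply: integrableZl => //; exact: int_ray_pG.
congr (_ + _); apply: eq_bigr => k _.
rewrite integralZl //; last exact: int_ray_pG.
by rewrite [in RHS]integral_mkcond.
Qed.

Lemma KI m (t om : nat -> R) (q : {poly R}) :
  (\int[mu]_x ((Dop q).[x] * weight m t om x)%:E =
  (\sum_(1 <= k < m.+1) om k * (q.[t k] * G (t k)))%:E)%E.
Proof.
rewrite J_decomp /pG int_all mule0 add0e -sumEFin.
apply: eq_bigr => k _; rewrite int_ray /F opprK -EFinM //.
Qed.

Definition J m (t om : nat -> R) (p : {poly R}) : R :=
  fine (\int[mu]_x (p.[x] * weight m t om x)%:E)%E.

Lemma JE m (t om : nat -> R) (p : {poly R}) :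
  (\int[mu]_x (p.[x] * weight m t om x)%:E)%E = (J m t om p)%:E.
Proof. by rewrite /J fineK // integrable_fin_num // intW. Qed.

Lemma JD m (t om : nat -> R) (p q : {poly R}) :
  J m t om (p + q) = J m t om p + J m t om q.
Proof.
apply: EFin_inj; rewrite EFinD -!JE.
under eq_integral do rewrite hornerD mulrDl EFinD.
by rewrite integralD //; apply: intW.
Qed.

Lemma JZ m (t om : nat -> R) (c : R) (p : {poly R}) :
  J m t om (c *: p) = c * J m t om p.
Proof.
apply: EFin_inj; rewrite EFinM -!JE.
under eq_integral do rewrite hornerZ -mulrA EFinM.
by rewrite integralZl //; apply: intW.
Qed.

Lemma JB m (t om : nat -> R) (p q : {poly R}) :
  J m t om (p - q) = J m t om p - J m t om q.
Proof. by rewrite -scaleN1r JD JZ mulN1r. Qed.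

Lemma J0 m (t om : nat -> R) : J m t om 0 = 0.
Proof. by rewrite -(scale0r (0 : {poly R})) JZ mul0r. Qed.

Lemma JKI m (t om : nat -> R) (q : {poly R}) :
  J m t om (Dop q) = \sum_(1 <= k < m.+1) om k * (q.[t k] * G (t k)).
Proof. by rewrite /J KI. Qed.

Lemma size_subC (p q : {poly R}) s : (size p <= s.+1)%N -> (size q <= s.+1)%N ->
  p`_s = q`_s -> (size (p - q)%R <= s)%N.
Proof.
move=> hp hq e; apply/leq_sizeP => j hj; rewrite coefB.
have [->|js] := eqVneq j s; first by rewrite e subrr.
have js' : (s.+1 <= j)%N by rewrite ltn_neqAle eq_sym js hj.
by rewrite (leq_sizeP _ _ hp) // (leq_sizeP _ _ hq) // subrr.
Qed.

Lemma size_deriv_le (p : {poly R}) s : (size p <= s.+1)%N -> (size p^`() <= s)%N.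
Proof.
move=> hp; apply/leq_sizeP => j hj.
by rewrite coef_deriv (leq_sizeP _ _ hp) ?mul0rn.
Qed.

Lemma size_XM (p : {poly R}) s : (size p <= s)%N -> (size ('X * p)%R <= s.+1)%N.
Proof.
move=> hp; apply/leq_sizeP => j hj; rewrite coefXM.
by case: j hj => //= j hj; apply: (leq_sizeP _ _ hp).
Qed.

Lemma monic_coef (p : {poly R}) n : p \is monic -> size p = n.+1 -> p`_n = 1.
Proof. by move=> /monicP; rewrite lead_coefE => + hs; rewrite hs. Qed.

Lemma Jorth m (t om : nat -> R) (P : nat -> {poly R}) (h : nat -> R) :
  (forall n, P n \is monic /\ size (P n) = n.+1) ->
  (forall j k, J m t om (P j * P k) = if j == k then h k else 0) ->
  forall n (r : {poly R}), (size r <= n)%N -> J m t om (P n * r) = 0.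
Proof.
move=> Pm JO n.
suff H : forall s (r : {poly R}), (size r <= s)%N -> (s <= n)%N -> J m t om (P n * r) = 0.
  by move=> r hr; exact: H hr (leqnn n).
elim=> [|s IH] r hr sn.
  by move: hr; rewrite leqn0 size_poly_eq0 => /eqP ->; rewrite mulr0 J0.
have [Pmon Psz] := Pm s.
set c := r`_s.
have hrs : (size (r - c *: P s)%R <= s)%N.
  apply: size_subC => //.
    by rewrite (leq_trans (size_scale_leq _ _)) // Psz.
  by rewrite coefZ (monic_coef _ _ Pmon Psz) mulr1.
have -> : r = (r - c *: P s) + c *: P s by rewrite subrK.
rewrite mulrDr JD (IH _ hrs (ltnW sn)) add0r -scalerAr JZ JO.
by rewrite gtn_eqF // mulr0.
Qed.

Lemma alpha_part m (t om : nat -> R) (P : nat -> {poly R}) (h alpha : nat -> R) n :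
  (forall n, P n \is monic /\ size (P n) = n.+1) ->
  (forall j k, J m t om (P j * P k) = if j == k then h k else 0) ->
  (forall k, 0 < h k) ->
  (forall n : nat,
     'X * P n = P n.+1 + alpha n *: P n
                + beta_of h n *: (if n is n'.+1 then P n' else 0)) ->
  alpha n = 2^-1 * \sum_(1 <= k < m.+1) Rnk t om P h n k.
Proof.
move=> Pm JO hpos rec.
have Jo := @Jorth m t om P h Pm JO.
have [Pmon Psz] := Pm n.
have e0 : forall k, J m t om (P k * (if k is k'.+1 then P k' else 0)) = 0.
  by case=> [|k] /=; [rewrite mulr0 J0 | rewrite JO gtn_eqF].
have e1 : J m t om (P n * ('X * P n)) = alpha n * h n.
  rewrite rec !mulrDr !JD -!scalerAr !JZ e0 !JO eqxx ltn_eqF //.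
  by rewrite mulr0 addr0 add0r.
have e2 : J m t om (Dop (P n * P n)) = 2 * (alpha n * h n).
  rewrite /Dop JB mulr2n JD derivM JD mulrCA e1.
  rewrite [(P n)^`() * _]mulrC Jo ?size_deriv_le ?Psz // addr0 subr0.
  by rewrite mulr2n mulrDl !mul1r.
have hn0 : h n != 0 by rewrite gt_eqF.
have eR : \sum_(1 <= k < m.+1) Rnk t om P h n k =
    (\sum_(1 <= k < m.+1) om k * ((P n * P n).[t k] * G (t k))) / h n.
  rewrite mulr_suml; apply: eq_bigr => k _; rewrite /Rnk hornerM /G; ring.
rewrite eR -JKI e2; field; exact: hn0.
Qed.

Lemma beta_part m (t om : nat -> R) (P : nat -> {poly R}) (h : nat -> R) n :
  (forall n, P n \is monic /\ size (P n) = n.+1) ->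
  (forall j k, J m t om (P j * P k) = if j == k then h k else 0) ->
  (forall k, 0 < h k) ->
  beta_of h n = 2^-1 * (\sum_(1 <= k < m.+1) rnk t om P h n k + n%:R).
Proof.
move=> Pm JO hpos.
have Jo := @Jorth m t om P h Pm JO.
case: n => [|n].
  by rewrite /= big1 ?add0r ?mulr0.
have [Pmon Psz] := Pm n.+1.
have [Pmon' Psz'] := Pm n.
have eX : J m t om ('X * (P n.+1 * P n)) = h n.+1.
  rewrite mulrCA.
  have -> : 'X * P n = ('X * P n - P n.+1) + P n.+1 by rewrite subrK.
  rewrite mulrDr JD JO eqxx Jo ?add0r //.
  apply: size_subC.
  - by apply: size_XM; rewrite Psz'.
  - by rewrite Psz.
  - by rewrite coefXM /= (monic_coef _ _ Pmon' Psz') (monic_coef _ _ Pmon Psz).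
have eD1 : J m t om ((P n.+1)^`() * P n) = n.+1%:R * h n.
  rewrite mulrC.
  have -> : (P n.+1)^`() = ((P n.+1)^`() - n.+1%:R *: P n) + n.+1%:R *: P n by rewrite subrK.
  rewrite mulrDr JD -scalerAr JZ JO eqxx Jo ?add0r //.
  apply: size_subC.
  - by apply: size_deriv_le; rewrite Psz.
  - by rewrite (leq_trans (size_scale_leq _ _)) // Psz'.
  - by rewrite coef_deriv coefZ (monic_coef _ _ Pmon Psz) (monic_coef _ _ Pmon' Psz') mulr1.
have eD2 : J m t om (P n.+1 * (P n)^`()) = 0.
  have hs : (size (P n)^`() <= n)%N by apply: size_deriv_le; rewrite Psz'.
  by rewrite Jo // (leq_trans hs).
have e3 : J m t om (Dop (P n.+1 * P n)) = 2 * h n.+1 - n.+1%:R * h n.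
  by rewrite /Dop JB mulr2n JD derivM JD eX eD1 eD2 addr0 mulr2n mulrDl !mul1r.
have hn0 : h n != 0 by rewrite gt_eqF.
have hn1 : h n.+1 != 0 by rewrite gt_eqF.
have eR : \sum_(1 <= k < m.+1) rnk t om P h n.+1 k =
    (\sum_(1 <= k < m.+1) om k * ((P n.+1 * P n).[t k] * G (t k))) / h n.
  rewrite mulr_suml; apply: eq_bigr => k _; rewrite /rnk hornerM /G; ring.
rewrite eR -JKI e3 /=; field; exact: hn0.
Qed.
End A.

Theorem lemma2p6 (R : realType) (m : nat) (t om : nat -> R)
  (P : nat -> {poly R}) (h alpha : nat -> R) :
  (1 <= m)%N ->
  (forall k : nat, (1 <= k)%N -> (k < m)%N -> t k < t k.+1) ->
  (forall l : nat, (l <= m)%N -> 0 <= \sum_(0 <= k < l.+1) om k) ->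
  (exists x : R, weight m t om x != 0) ->
  (* P_n monic of degree n, orthogonal w.r.t. w with norms h_n > 0 *)
  (forall n : nat, P n \is monic /\ size (P n) = n.+1) ->
  (forall j k : nat,
     (\int[@lebesgue_measure R]_x ((P j).[x] * (P k).[x] * weight m t om x)%:E)%E
     = ((if j == k then h k else 0)%:E)%E) ->
  (forall k : nat, 0 < h k) ->
  (* three-term recurrence, with beta_n = h_n/h_{n-1}, beta_0 = 0, P_{-1} = 0 *)
  (forall n : nat,
     'X * P n = P n.+1 + alpha n *: P n
                + beta_of h n *: (if n is n'.+1 then P n' else 0)) ->
  forall n : nat,
    alpha n = 2^-1 * \sum_(1 <= k < m.+1) Rnk t om P h n k /\
    beta_of h n = 2^-1 * (\sum_(1 <= k < m.+1) rnk t om P h n k + n%:R).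
Proof.
move=> m1 tinc psum wnz Pm orth hpos rec n.
have JO : forall j k, J m t om (P j * P k) = if j == k then h k else 0.
  move=> j k; rewrite /J; under eq_integral do rewrite hornerM.
  by rewrite orth; case: ifP.
split; [exact: alpha_part | exact: beta_part].
Qed.
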